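(* Let $G$ be a group and $\mathcal{B}_1,\mathcal{B}_2:G\to G$ maps, and let $a\circ b=\mathcal{B}_1(a)b\mathcal{B}_2(a)$. The following are equivalent: (i) $(G,\mathcal{B}_1,\mathcal{B}_2)$ is a Rota-Baxter system of groups; (ii) $\circ$ is associative and $\mathcal{B}_1$ is a semigroup homomorphism from $(G,\circ)$ to $(G,\cdot)$; (iii) $\circ$ is associative and $\mathcal{B}_2$ is a semigroup anti-homomorphism from $(G,\circ)$ to $(G,\cdot)$, i.e. $\mathcal{B}_2(a\circ b)=\mathcal{B}_2(b)\mathcal{B}_2(a)$.
   Context: A Rota-Baxter system of groups is a triple $(G,\mathcal{B}_1,\mathcal{B}_2)$ where $G$ is a group and $\mathcal{B}_1,\mathcal{B}_2:G\to G$ are maps such that for all $a,b\in G$: $\mathcal{B}_1(a)\mathcal{B}_1(b)=\mathcal{B}_1(\mathcal{B}_1(a)b\mathcal{B}_2(a))$ and $\mathcal{B}_2(b)\mathcal{B}_2(a)=\mathcal{B}_2(\mathcal{B}_1(a)b\mathcal{B}_2(a))$. *)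

(* Defs.v *)
From HB Require Import structures.
From mathcomp Require Import all_boot.
From mathcomp Require Export monoid.

Set Implicit Arguments.
Unset Strict Implicit.
Unset Printing Implicit Defensive.

Local Open Scope group_scope.
Import Monoid.Theory.

Definition rbs_circ (G : groupType) (B1 B2 : G -> G) (a b : G) : G :=
  B1 a * b * B2 a.

Definition is_RB_system (G : groupType) (B1 B2 : G -> G) : Prop :=
  (forall a b : G, B1 a * B1 b = B1 (B1 a * b * B2 a)) /\
  (forall a b : G, B2 b * B2 a = B2 (B1 a * b * B2 a)).

(* Main.v *)
Require Import Defs.
From mathcomp Require Import all_boot.
From mathcomp Require Import monoid.

Local Open Scope group_scope.

Theorem proposition3p2 (G : groupType) (B1 B2 : G -> G) :
  let circ := rbs_circ B1 B2 in
  (is_RB_system B1 B2 <->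
     (associative circ /\ (forall a b : G, B1 (circ a b) = B1 a * B1 b))) /\
  (is_RB_system B1 B2 <->
     (associative circ /\ (forall a b : G, B2 (circ a b) = B2 b * B2 a))).
Proof.
move=> circ.
have fromRB : is_RB_system B1 B2 -> associative circ.
  move=> [h1 h2] a b c; rewrite /circ /rbs_circ.
  by rewrite -h1 -h2 !mulgA.
split; split.
- move=> H; split; first exact: fromRB.
  by case: H => h1 _ a b; rewrite /circ /rbs_circ -h1.
- move=> [As h1]; split => a b; first exact: (esym (h1 a b)).
  have E := As a b 1.
  rewrite /circ /rbs_circ in E h1.
  rewrite h1 !mulg1 !mulgA in E.
  apply: (mulgI (B1 a * B1 b)).
  by rewrite !mulgA -E.
- move=> H; split; first exact: fromRB.
  by case: H => _ h2 a b; rewrite /circ /rbs_circ -h2.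
- move=> [As h2]; split => a b; last exact: (esym (h2 a b)).
  have E := As a b 1.
  rewrite /circ /rbs_circ in E h2.
  rewrite h2 !mulg1 !mulgA in E.
  apply: (mulIg (B2 b * B2 a)).
  by rewrite !mulgA E.
Qed.
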